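(* Let $r>0$, $d>0$ with $d\sqrt{2}<r$, and let $X\subseteq\mathbb{R}^2$ be a bounded $r$-regular set whose boundary contains no point of $d\mathbb{Z}^2$. Let $C$ be a grey pixel of the lattice $d\mathbb{Z}^2$ having two direct neighbour pixels (pixels sharing a side with $C$) which share a vertex with each other and which are either both black or both white. Let $p$ be the vertex of $C$ that belongs to neither of these two neighbour pixels. If $q\in\partial X\cap C$, then $q\in B_d(p)$, the open ball of radius $d$ centred at $p$.
   Context: A closed set $X\subseteq\mathbb{R}^2$ is $r$-regular if for each $x\in\partial X$ there are two open balls of radius $r$, $B_r(x_b)\subseteq X$ and $B_r(x_w)\subseteq \mathbb{R}^2\setminus X$, with $\overline{B_r(x_b)}\cap\overline{B_r(x_w)}=\{x\}$. Pixels are the closed squares $[dk,d(k+1)]\times[dl,d(l+1)]$, $k,l\in\mathbb{Z}$. A pixel $P$ is black if $\mathrm{area}(X\cap P)=d^2$, white if $\mathrm{area}(X\cap P)=0$, and grey otherwise. *)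

(* Defs.v *)
From HB Require Import structures.
From mathcomp Require Import all_boot all_order all_algebra.
From mathcomp Require Import all_classical all_reals all_analysis.
Set Implicit Arguments. Unset Strict Implicit. Unset Printing Implicit Defensive.
Import Order.TTheory GRing.Theory Num.Theory.
Local Open Scope classical_set_scope.
Local Open Scope ring_scope.

Section Defs.
Variable R : realType.
Local Notation pt := (R * R)%type.

Definition edist (x y : pt) : R :=
  Num.sqrt ((x.1 - y.1) ^+ 2 + (x.2 - y.2) ^+ 2).

Definition oball (c : pt) (r : R) : set pt := [set x | edist c x < r].
Definition cball (c : pt) (r : R) : set pt := [set x | edist c x <= r].

Definition bdry (X : set pt) : set pt :=
  [set x | forall e : R, 0 < e ->
     (exists y, oball x e y /\ X y) /\ (exists y, oball x e y /\ ~ X y)].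

Definition bounded2 (X : set pt) : Prop :=
  exists M : R, forall x, X x -> edist (0, 0) x <= M.

Definition eclosed (X : set pt) : Prop :=
  forall x, ~ X x -> exists e : R, 0 < e /\ oball x e `<=` ~` X.

Definition r_regular (r : R) (X : set pt) : Prop :=
  eclosed X /\
  forall x, bdry X x ->
    exists xb xw : pt,
      oball xb r `<=` X /\ oball xw r `<=` ~` X /\
      cball xb r `&` cball xw r = [set x].

Definition pixel (d : R) (k l : int) : set pt :=
  [set x | d * k%:~R <= x.1 <= d * (k + 1)%:~R /\
           d * l%:~R <= x.2 <= d * (l + 1)%:~R].

Definition area : set pt -> \bar R :=
  (@lebesgue_measure R \x @lebesgue_measure R)%E.

Definition black (X : set pt) (d : R) (k l : int) : Prop :=
  area (X `&` pixel d k l) = (d ^+ 2)%:E.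
Definition white (X : set pt) (d : R) (k l : int) : Prop :=
  area (X `&` pixel d k l) = 0%E.
Definition grey (X : set pt) (d : R) (k l : int) : Prop :=
  ~ black X d k l /\ ~ white X d k l.

Definition direct_neighbour (k l k' l' : int) : Prop :=
  (`|k' - k|%N + `|l' - l|%N = 1)%N.

Definition is_vertex (d : R) (k l : int) (v : pt) : Prop :=
  exists i j : int, 0 <= i <= 1 /\ 0 <= j <= 1 /\
    v = (d * (k + i)%:~R, d * (l + j)%:~R).

Definition lattice_pt (d : R) (v : pt) : Prop :=
  exists k l : int, v = (d * k%:~R, d * l%:~R).
End Defs.

(* Main.v *)
Require Import Defs.
From HB Require Import structures.
From mathcomp Require Import all_boot all_order all_algebra.
From mathcomp Require Import all_classical all_reals all_analysis.
From mathcomp Require Import ring lra zify.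
Set Implicit Arguments. Unset Strict Implicit. Unset Printing Implicit Defensive.
Import Order.TTheory GRing.Theory Num.Theory.
Local Open Scope classical_set_scope.
Local Open Scope ring_scope.

Section Core.
Variable R : realType.

Lemma core0 (d r q1 q2 c1 c2 : R) : 0 < d -> 2*d^+2 < r^+2 ->
  0 <= q1 <= d -> 0 <= q2 <= d -> (c1-q1)^+2 + (c2-q2)^+2 = r^+2 ->
  (forall a b, ((d <= a <= 2*d /\ 0 <= b <= d) \/ (0 <= a <= d /\ d <= b <= 2*d)) ->
       r^+2 <= (c1-a)^+2+(c2-b)^+2) ->
  ~ (q1 = d /\ q2 = 0) -> ~ (q1 = 0 /\ q2 = d) -> ~ (q1 = d /\ q2 = d) ->
  q1^+2 + q2^+2 < d^+2.
Proof.
move=> d0 rd /andP[q10 q1d] /andP[q20 q2d] eqr H n1 n2 n3.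
rewrite ltNge; apply/negP => qd.
have H1 : forall a b, d <= a -> a <= 2*d -> 0 <= b -> b <= d ->
   r^+2 <= (c1-a)^+2+(c2-b)^+2.
  by move=> a b *; apply: H; left; split; apply/andP; split.
have H2 : forall a b, 0 <= a -> a <= d -> d <= b -> b <= 2*d ->
   r^+2 <= (c1-a)^+2+(c2-b)^+2.
  by move=> a b *; apply: H; right; split; apply/andP; split.
rewrite -eqr in H1 H2.
case: (ltrP c1 0) => hc1.
- case: (ltrP c2 0) => hc2.
  + have A := H1 d 0 (lexx _) ltac:(lra) (lexx _) ltac:(lra).
    have B := H2 0 d (lexx _) ltac:(lra) (lexx _) ltac:(lra).
    have A' : (-c1)*(d-q1) >= (-c2)*q2 by nra.
    have B' : (-c2)*(d-q2) >= (-c1)*q1 by nra.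
    have S1 : (-c2)*q2*(d-q2) <= (-c1)*(d-q1)*(d-q2) by apply: ler_wpM2r => //; lra.
    have S2 : (-c1)*q1*q2 <= (-c2)*(d-q2)*q2 by apply: ler_wpM2r.
    have S3 : 0 <= (-c1) * d * (d - q1 - q2) by nra.
    have S : q1 + q2 <= d.
      rewrite leNgt; apply/negP => h.
      have : 0 < (-c1) * d * (q1 + q2 - d) by apply: mulr_gt0; [apply: mulr_gt0|]; lra.
      nra.
    have P : q1 * q2 = 0 by nra.
    move: P => /eqP; rewrite mulf_eq0 => /orP[] /eqP P.
    * by apply: n2; split => //; nra.
    * by apply: n1; split => //; nra.
  + case: (lerP c2 d) => hc2'.
    * have A := H2 0 d (lexx _) ltac:(lra) (lexx _) ltac:(lra).
      have : q1 = 0 by nra.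
      by move=> q10'; apply: n2; split => //; nra.
    * case: (lerP c2 (2*d)) => hc2''.
      -- have A := H2 0 c2 (lexx _) ltac:(lra) ltac:(lra) ltac:(lra).
         have : q1 = 0 by nra.
         by move=> q10'; apply: n2; split => //; nra.
      -- have A := H2 0 (2*d) (lexx _) ltac:(lra) ltac:(lra) (lexx _).
         nra.
- case: (lerP c1 d) => hc1'.
  + case: (ltrP c2 0) => hc2.
    * have A := H1 d 0 (lexx _) ltac:(lra) (lexx _) ltac:(lra).
      have : q2 = 0 by nra.
      by move=> q20'; apply: n1; split => //; nra.
    * case: (lerP c2 d) => hc2'.
      -- have A := H1 d c2 (lexx _) ltac:(lra) hc2 hc2'. nra.
      -- case: (lerP c2 (2*d)) => hc2''.
         ++ have A := H2 c1 c2 hc1 hc1' ltac:(lra) hc2''. nra.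
         ++ have A := H2 c1 (2*d) hc1 hc1' ltac:(lra) (lexx _). nra.
  + case: (ltrP c2 0) => hc2.
    * case: (lerP c1 (2*d)) => hc1''.
      -- have A := H1 c1 0 ltac:(lra) hc1'' (lexx _) ltac:(lra).
         have : q2 = 0 by nra.
         by move=> q20'; apply: n1; split => //; nra.
      -- have A := H1 (2*d) 0 ltac:(lra) (lexx _) (lexx _) ltac:(lra). nra.
    * case: (lerP c2 d) => hc2'.
      -- case: (lerP c1 (2*d)) => hc1''.
         ++ have A := H1 c1 c2 ltac:(lra) hc1'' hc2 hc2'. nra.
         ++ have A := H1 (2*d) c2 ltac:(lra) (lexx _) hc2 hc2'. nra.
      -- have A := H1 d d (lexx _) ltac:(lra) ltac:(lra) (lexx _).
         have : q1 = d by nra.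
         by move=> q1d'; apply: n3; split => //; nra.
Qed.
End Core.

Section G.
Variable R : realType.
Local Notation pt := (R * R)%type.
Local Notation edist := (@Defs.edist R).

Definition dist2 (x y : pt) : R := (x.1 - y.1) ^+ 2 + (x.2 - y.2) ^+ 2.

Lemma dist2_ge0 x y : 0 <= dist2 x y.
Proof. by rewrite /dist2 addr_ge0 // sqr_ge0. Qed.

Lemma ed_ge0 x y : 0 <= edist x y.
Proof. exact: sqrtr_ge0. Qed.

Lemma ed_sq x y : edist x y ^+ 2 = dist2 x y.
Proof. by rewrite /Defs.edist sqr_sqrtr // dist2_ge0. Qed.

Lemma ed_lt x y r : 0 < r -> (edist x y < r) = (dist2 x y < r ^+ 2).
Proof.
move=> r0; rewrite -ed_sq; apply/idP/idP => h.
- by rewrite ltr_pXn2r // ?nnegrE ?ed_ge0 ?ltW.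
- by rewrite -(ltr_pXn2r (n:=2)) // ?nnegrE ?ed_ge0 ?ltW.
Qed.

Lemma ed_le x y r : 0 <= r -> (edist x y <= r) = (dist2 x y <= r ^+ 2).
Proof.
move=> r0; rewrite -ed_sq; apply/idP/idP => h.
- by rewrite ler_pXn2r // ?nnegrE ?ed_ge0.
- by rewrite -(ler_pXn2r (n:=2)) // ?nnegrE ?ed_ge0.
Qed.

Lemma ed_sym x y : edist x y = edist y x.
Proof. by rewrite /Defs.edist; congr Num.sqrt; lra. Qed.

Lemma ed_tri a b c : edist a c <= edist a b + edist b c.
Proof.
have h1 := ed_sq a b; have h2 := ed_sq b c; have h3 := ed_sq a c.
have g1 := ed_ge0 a b; have g2 := ed_ge0 b c; have g3 := ed_ge0 a c.
move: h1 h2 h3 g1 g2 g3; rewrite /dist2.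
set u1 := a.1 - b.1; set u2 := a.2 - b.2; set v1 := b.1 - c.1; set v2 := b.2 - c.2.
have -> : a.1 - c.1 = u1 + v1 by rewrite /u1 /v1; lra.
have -> : a.2 - c.2 = u2 + v2 by rewrite /u2 /v2; lra.
set su := edist a b; set sv := edist b c; set sw := edist a c => h1 h2 h3 g1 g2 g3.
have L : (u1*v1 + u2*v2)^+2 <= su^+2 * sv^+2.
  rewrite h1 h2; have := sqr_ge0 (u1*v2 - u2*v1); lra.
have CS : u1*v1 + u2*v2 <= su * sv.
  rewrite leNgt; apply/negP => h.
  have p0 : 0 <= su * sv by rewrite mulr_ge0.
  have : (su*sv)^+2 < (u1*v1 + u2*v2)^+2 by nra.
  rewrite exprMn; lra.
rewrite -(ler_pXn2r (n:=2)) ?nnegrE ?addr_ge0 //; nra.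
Qed.

Lemma pos_min {a b : R} : 0 < a -> 0 < b -> exists h, [/\ 0 < h, h <= a & h <= b].
Proof.
move=> a0 b0; exists (Num.min a b); split.
- by rewrite lt_min a0 b0.
- by rewrite ge_min lexx.
- by rewrite ge_min lexx orbT.
Qed.

Definition crect (A B C D : R) : set pt := [set x | A <= x.1 <= B /\ C <= x.2 <= D].
Definition orect (A B C D : R) : set pt := [set x | A < x.1 < B /\ C < x.2 < D].

Lemma perturb A B C D z e : A < B -> C < D -> 0 < e -> crect A B C D z ->
  exists z', orect A B C D z' /\ edist z z' < e.
Proof.
move=> AB CD e0 [/andP[z1a z1b] /andP[z2a z2b]].
set W := B - A + (D - C).
have W0 : 0 < W by rewrite /W; lra.
have h2 : 0 < 1 / 2 :> R by lra.
have [t [t0 t1 t2]] := pos_min h2 (divr_gt0 e0 W0).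
have tW : t * W <= e by rewrite -(ler_pdivlMr _ _ W0).
set m1 := (A + B) / 2; set m2 := (C + D) / 2.
exists (z.1 + t * (m1 - z.1), z.2 + t * (m2 - z.2)); split.
  rewrite /orect /= /m1 /m2; split; apply/andP; split; nra.
rewrite ed_lt // /dist2 /=.
have -> : (z.1 - (z.1 + t * (m1 - z.1))) ^+ 2 + (z.2 - (z.2 + t * (m2 - z.2))) ^+ 2
   = t^+2 * ((m1 - z.1)^+2 + (m2 - z.2)^+2) by ring.
have b1 : (m1 - z.1)^+2 <= ((B - A)/2)^+2 by rewrite /m1; nra.
have b2 : (m2 - z.2)^+2 <= ((D - C)/2)^+2 by rewrite /m2; nra.
have b3 : ((B - A)/2)^+2 + ((D - C)/2)^+2 <= W^+2 / 4 by rewrite /W; nra.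
have b4 : (t * W)^+2 <= e^+2 by rewrite ler_pXn2r // ?nnegrE ?mulr_ge0 // ?ltW.
have b5 : 0 <= t^+2 by rewrite sqr_ge0.
nra.
Qed.

Lemma square_in A B C D y rho : orect A B C D y -> 0 < rho ->
  exists h, 0 < h /\ forall w, `|w.1 - y.1| <= h -> `|w.2 - y.2| <= h ->
     crect A B C D w /\ edist y w < rho.
Proof.
move=> [/andP[y1a y1b] /andP[y2a y2b]] r0.
have s1 : 0 < y.1 - A by lra.
have s2 : 0 < B - y.1 by lra.
have s3 : 0 < y.2 - C by lra.
have s4 : 0 < D - y.2 by lra.
have [h1 [h10 h11 h12]] := pos_min s1 s2.
have [h2 [h20 h21 h22]] := pos_min s3 s4.
have [h3 [h30 h31 h32]] := pos_min h10 h20.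
have r2 : 0 < rho / 2 by lra.
have [h [h0 hh1 hh2]] := pos_min h30 r2.
exists h; split => // w a1 a2.
move: a1 a2; rewrite !ler_norml => /andP[a1 a1'] /andP[a2 a2'].
split.
  by rewrite /crect /=; split; apply/andP; split; lra.
rewrite ed_lt // /dist2.
have e1 : (y.1 - w.1)^+2 <= h^+2 by nra.
have e2 : (y.2 - w.2)^+2 <= h^+2 by nra.
nra.
Qed.
End G.

Section M.
Variable R : realType.
Local Notation pt := (R * R)%type.
Local Notation edist := (@Defs.edist R).

Lemma leb_mono (A B : set R) : A `<=` B -> (@lebesgue_measure R A <= lebesgue_measure B)%E.
Proof.
move=> AB. rewrite /lebesgue_measure /lebesgue_stieltjes_measure /measure_extension.
exact: le_mu_ext.
Qed.

Lemma area_mono (A B : set (R * R)) : A `<=` B -> (area A <= area B)%E.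
Proof.
move=> AB; rewrite /area /product_measure1.
rewrite !ge0_integralE //.
apply: le_ereal_sup => _ [h hf <-]; exists h => // x.
apply: (le_trans (hf x)).
rewrite /patch /=. rewrite !mem_setT /=.
apply: leb_mono => y; rewrite /xsection /= !inE; exact: AB.
Qed.

Lemma crectE (A B C D : R) : crect A B C D = `[A, B]%classic `*` `[C, D]%classic.
Proof.
apply/seteqP; split => x /=; rewrite /crect /= !in_itv /= => -[]; by split.
Qed.

Lemma crect_meas (A B C D : R) : measurable (crect A B C D).
Proof. by rewrite crectE; apply: measurableX; exact: measurable_itv. Qed.

Lemma area_crect (A B C D : R) : A < B -> C < D ->
  area (crect A B C D) = ((B - A) * (D - C))%:E.
Proof.
move=> AB CD; rewrite /area crectE product_measure1E; try exact: measurable_itv.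
change (lebesgue_measure `[A, B]%classic * lebesgue_measure `[C, D]%classic = ((B - A) * (D - C))%:E)%E.
by rewrite !lebesgue_measure_itv /= !lte_fin AB CD -!EFinB.
Qed.

Lemma pix_lt (d : R) (k : int) : 0 < d -> d * k%:~R < d * (k + 1)%:~R.
Proof. by move=> d0; rewrite intrD mulrDr mulr1; lra. Qed.

Lemma pixE (d : R) k l : pixel d k l =
  crect (d * k%:~R) (d * (k + 1)%:~R) (d * l%:~R) (d * (l + 1)%:~R).
Proof. by []. Qed.

Lemma ed_xx (z : pt) : edist z z = 0.
Proof. by rewrite /Defs.edist !subrr expr0n /= addr0 sqrtr0. Qed.

Lemma sq_sub (z c : pt) h : crect (c.1 - h) (c.1 + h) (c.2 - h) (c.2 + h) z ->
  `|z.1 - c.1| <= h /\ `|z.2 - c.2| <= h.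
Proof.
by move=> [/andP[a b] /andP[e f]]; rewrite !ler_norml; split; apply/andP; split; lra.
Qed.

Lemma black_sub (X : set pt) d k l : 0 < d -> black X d k l -> eclosed X ->
  pixel d k l `<=` X.
Proof.
move=> d0 hb hc z hz; case: (pselect (X z)) => // nz; exfalso.
have [e [e0 he]] := hc z nz.
rewrite pixE in hz hb.
set A := d * k%:~R in hz hb; set B := d * (k + 1)%:~R in hz hb.
set C := d * l%:~R in hz hb; set D := d * (l + 1)%:~R in hz hb.
have AB : A < B by apply: pix_lt.
have CD : C < D by apply: pix_lt.
have e2 : 0 < e / 2 by lra.
have [z' [hz' dz']] := perturb AB CD e2 hz.
have [h [h0 hh]] := square_in hz' e2.
set S := crect (z'.1 - h) (z'.1 + h) (z'.2 - h) (z'.2 + h).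
have SP : S `<=` crect A B C D.
  by move=> w /sq_sub [w1 w2]; have [] := hh w w1 w2.
have SX : S `<=` ~` X.
  move=> w /sq_sub [w1 w2]; have [_ dw] := hh w w1 w2.
  apply: he; rewrite /oball /=.
  by apply: (le_lt_trans (ed_tri z z' w)); lra.
have m1 : (area (X `&` crect A B C D) <= area (crect A B C D `\` S))%E.
  by apply: area_mono => w [xw pw]; split => // sw; exact: SX sw xw.
have m2 : (area (crect A B C D `\` S) <= area (crect A B C D))%E.
  by apply: area_mono => w [].
have E : area (crect A B C D) = (area (crect A B C D `\` S) + area (crect A B C D `&` S))%E.
  by rewrite /area; apply: measureDI; apply: crect_meas.
have SE : crect A B C D `&` S = S.
  by apply/seteqP; split => w //=; [case | move=> sw; split => //; exact: SP].
rewrite SE in E.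
rewrite !area_crect in E m2 hb; try lra.
have Bd : B - A = d by rewrite /A /B intrD mulrDr; lra.
have Dd : D - C = d by rewrite /C /D intrD mulrDr; lra.
rewrite Bd Dd in E m2.
move: m1 m2 E; rewrite hb; set v := area _ => m1 m2 E.
have vE : v = (d * d)%:E by apply/le_anti; rewrite m2 /= expr2 in m1 *; rewrite m1.
rewrite vE -EFinD in E; move: E => /eqP; rewrite eqe => /eqP E.
have : 0 < (z'.1 + h - (z'.1 - h)) * (z'.2 + h - (z'.2 - h)) by apply: mulr_gt0; lra.
lra.
Qed.

Lemma interior_or_bdry (X : set pt) z : X z ->
  (exists e, 0 < e /\ oball z e `<=` X) \/ bdry X z.
Proof.
move=> xz; case: (pselect (exists e, 0 < e /\ oball z e `<=` X)) => [h|h]; [by left|right].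
move=> e e0; split; first by exists z; split => //; rewrite /oball /= ed_xx.
apply: contrapT => nh; apply: h; exists e; split => // y oy.
apply: contrapT => ny; apply: nh; by exists y.
Qed.

Lemma white_open (X : set pt) r d k l : 0 < r -> 0 < d -> white X d k l -> r_regular r X ->
  forall z, orect (d * k%:~R) (d * (k + 1)%:~R) (d * l%:~R) (d * (l + 1)%:~R) z -> ~ X z.
Proof.
move=> r0 d0 hw [hc hreg] z hz xz.
rewrite /white pixE in hw.
set A := d * k%:~R in hz hw; set B := d * (k + 1)%:~R in hz hw.
set C := d * l%:~R in hz hw; set D := d * (l + 1)%:~R in hz hw.
have [y [rho [hy [rho0 hyX]]]] : exists y rho, orect A B C D y /\ 0 < rho /\ oball y rho `<=` X.
  case: (interior_or_bdry xz) => [[e [e0 he]]|bz]; first by exists z, e.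
  have [xb [xw [hb [_ hi]]]] := hreg z bz.
  have : (cball xb r `&` cball xw r) z by rewrite hi.
  case=> hzb _; move: hzb; rewrite /cball /= (ed_le _ _ (ltW r0)) /dist2 => hzb.
  move: hz => [/andP[z1a z1b] /andP[z2a z2b]].
  have s1 : 0 < z.1 - A by lra.
  have s2 : 0 < B - z.1 by lra.
  have s3 : 0 < z.2 - C by lra.
  have s4 : 0 < D - z.2 by lra.
  have [h1 [h10 h11 h12]] := pos_min s1 s2.
  have [h2 [h20 h21 h22]] := pos_min s3 s4.
  have [m [m0 mm1 mm2]] := pos_min h10 h20.
  have m2r : 0 < m / (2 * r) by apply: divr_gt0; lra.
  have [t [t0 t1 t2]] := pos_min ltr01 m2r.
  have tr : t * r <= m / 2.
    move: t2; rewrite ler_pdivlMr; last by lra.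
    by move=> ?; lra.
  have b1 : `|xb.1 - z.1| <= r.
    have := sqr_ge0 (xb.2 - z.2).
    by rewrite ler_norml; move=> ?; apply/andP; split; nra.
  have b2 : `|xb.2 - z.2| <= r.
    have := sqr_ge0 (xb.1 - z.1).
    by rewrite ler_norml; move=> ?; apply/andP; split; nra.
  move: b1 b2; rewrite !ler_norml => /andP[b1 b1'] /andP[b2 b2'].
  exists (z.1 + t * (xb.1 - z.1), z.2 + t * (xb.2 - z.2)), (t * r).
  split; [|split; first by apply: mulr_gt0].
    have p1 : t * (- r) <= t * (xb.1 - z.1) by apply: ler_wpM2l; lra.
    have p2 : t * (xb.1 - z.1) <= t * r by apply: ler_wpM2l; lra.
    have p3 : t * (- r) <= t * (xb.2 - z.2) by apply: ler_wpM2l; lra.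
    have p4 : t * (xb.2 - z.2) <= t * r by apply: ler_wpM2l; lra.
    rewrite mulrN in p1 p3.
    by rewrite /orect /=; split; apply/andP; split; lra.
  move=> w ow; apply: hb; rewrite /oball /=.
  have dy : edist xb (z.1 + t * (xb.1 - z.1), z.2 + t * (xb.2 - z.2)) <= (1 - t) * r.
    rewrite ed_le /dist2 /=; last by apply: mulr_ge0; lra.
    have -> : (xb.1 - (z.1 + t * (xb.1 - z.1))) ^+ 2 + (xb.2 - (z.2 + t * (xb.2 - z.2))) ^+ 2
       = (1 - t)^+2 * ((xb.1 - z.1) ^+ 2 + (xb.2 - z.2) ^+ 2) by ring.
    rewrite exprMn; apply: ler_wpM2l; first by rewrite sqr_ge0.
    exact: hzb.
  move: ow; rewrite /oball /= => ow.
  apply: (le_lt_trans (ed_tri _ _ w)); lra.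
have [h [h0 hh]] := square_in hy rho0.
set S := crect (y.1 - h) (y.1 + h) (y.2 - h) (y.2 + h).
have SP : S `<=` X `&` crect A B C D.
  move=> w /sq_sub [w1 w2]; have [pw dw] := hh w w1 w2; split => //; exact: hyX.
have AB : A < B by apply: pix_lt.
have CD : C < D by apply: pix_lt.
have := area_mono SP; rewrite hw area_crect; [ | lra | lra] => H.
have : (0 < ((y.1 + h - (y.1 - h)) * (y.2 + h - (y.2 - h)))%:E)%E.
  by rewrite lte_fin; apply: mulr_gt0; lra.
by move=> /lt_le_trans /(_ H); rewrite ltxx.
Qed.
End M.

Section N.
Variable R : realType.

Lemma dn_cases (k l k' l' : int) : direct_neighbour k l k' l' ->
  (k' = k + 1 /\ l' = l) \/ (k' = k - 1 /\ l' = l) \/ (k' = k /\ l' = l + 1) \/ (k' = k /\ l' = l - 1).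
Proof. rewrite /direct_neighbour => h; lia. Qed.

Lemma nb (d : R) (k l k' l' i j : int) : 0 < d -> direct_neighbour k l k' l' ->
  0 <= i <= 1 -> 0 <= j <= 1 ->
  ~ pixel d k' l' (d * (k + i)%:~R, d * (l + j)%:~R) ->
  (k' = k + (1 - 2 * i) /\ l' = l) \/ (k' = k /\ l' = l + (1 - 2 * j)).
Proof.
move=> d0 /dn_cases hn hi hj; move: hn.
have [->|->] : i = 0 \/ i = 1 by lia.
all: have [->|->] : j = 0 \/ j = 1 by lia.
all: move=> hn hp; case: hn hp => [[-> ->]|[[-> ->]|[[-> ->]|[-> ->]]]] hp.
all: try (by left; split => //; lia).
all: try (by right; split => //; lia).
all: exfalso; apply: hp; rewrite /pixel /=.
all: rewrite ?intrD ?intrB ?mulrDr ?mulrBr /= ?mulr1 ?mulr0 ?addr0.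
all: split; apply/andP; split; lra.
Qed.
End N.

Section C1.
Variable R : realType.

Lemma core1 (d r sx sy px py : R) (q c : R * R) : sx^+2 = 1 -> sy^+2 = 1 -> 0 < d ->
  2*d^+2 < r^+2 ->
  0 <= sx*(q.1 - px) <= d -> 0 <= sy*(q.2-py) <= d -> dist2 c q = r^+2 ->
  (forall a b, ((d <= a <= 2*d /\ 0 <= b <= d) \/ (0 <= a <= d /\ d <= b <= 2*d)) ->
     r^+2 <= dist2 c (px + sx*a, py + sy*b)) ->
  q <> (px + sx*d, py) -> q <> (px, py + sy*d) -> q <> (px + sx*d, py + sy*d) ->
  dist2 (px,py) q < d^+2.
Proof.
move=> hx hy d0 rd hq1 hq2 E H n1 n2 n3.
have ss (s x : R) : s^+2 = 1 -> s * (s * x) = x by move=> hs; rewrite mulrA -expr2 hs mul1r.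
have key (s x y : R) : s^+2 = 1 -> (s*x - s*y)^+2 = (x-y)^+2.
  by move=> hs; rewrite -mulrBr exprMn hs mul1r.
have := @core0 R d r (sx*(q.1-px)) (sy*(q.2-py)) (sx*(c.1-px)) (sy*(c.2-py)) d0 rd hq1 hq2.
rewrite !key // -E /dist2.
have -> : c.1 - px - (q.1 - px) = c.1 - q.1 by ring.
have -> : c.2 - py - (q.2 - py) = c.2 - q.2 by ring.
move=> /(_ erefl).
move=> C.
have R1 : (sx*(q.1-px))^+2 + (sy*(q.2-py))^+2 = (px - q.1)^+2 + (py - q.2)^+2.
  by rewrite !exprMn hx hy !mul1r; ring.
have P1 (s x y : R) : s^+2 = 1 -> s * (x - y) = d -> x = y + s * d.
  by move=> hs <-; rewrite ss //; ring.
have P0 (s x y : R) : s^+2 = 1 -> s * (x - y) = 0 -> x = y.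
  by move=> hs h; have := ss s (x - y) hs; rewrite h mulr0 => /eqP; rewrite eq_sym subr_eq0 => /eqP.
rewrite /=; rewrite -R1; apply: C.
- move=> a b reg; have := H a b reg; rewrite /dist2 /=.
  have e1 : (sx*(c.1-px) - a)^+2 = (c.1 - (px + sx*a))^+2.
    by rewrite -{1}(ss sx a hx) key //; congr (_^+2); ring.
  have e2 : (sy*(c.2-py) - b)^+2 = (c.2 - (py + sy*b))^+2.
    by rewrite -{1}(ss sy b hy) key //; congr (_^+2); ring.
  by rewrite e1 e2; move: E; rewrite /dist2 => ->.
- move=> [h1 h2]; apply: n1; rewrite [q]surjective_pairing.
  by rewrite (P1 _ _ _ hx h1) (P0 _ _ _ hy h2).
- move=> [h1 h2]; apply: n2; rewrite [q]surjective_pairing.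
  by rewrite (P0 _ _ _ hx h1) (P1 _ _ _ hy h2).
- move=> [h1 h2]; apply: n3; rewrite [q]surjective_pairing.
  by rewrite (P1 _ _ _ hx h1) (P1 _ _ _ hy h2).
Qed.
End C1.

Unset Implicit Arguments. Set Strict Implicit.

Ltac ar := rewrite ?intrD ?intrN ?intrB ?mulrDr ?mulrBr ?mulr1 ?mulr0 ?addr0 ?subr0 ?mulN1r ?mul1r /=; lra.

Ltac solve_ob Hc P12 x1 x2 x3 := first [ assumption
  | by rewrite ?expr1n ?sqrrN ?expr1n
  | (apply/andP; split; ar)
  | (let a := fresh "a" in let b := fresh "b" in let reg := fresh "reg" in
     intros a b reg; apply: Hc; apply: P12;
     case: reg => [[/andP[? ?] /andP[? ?]]|[/andP[? ?] /andP[? ?]]]; [left|right];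
     rewrite /pixel /=; split; apply/andP; split; ar)
  | (let E := fresh "E" in intro E; apply: x1; rewrite E; congr pair; ar)
  | (let E := fresh "E" in intro E; apply: x2; rewrite E; congr pair; ar)
  | (let E := fresh "E" in intro E; apply: x3; rewrite E; congr pair; ar) ].

Theorem lemma5p1 (R : realType) (r d : R) (X : set (R * R))
  (k l k1 l1 k2 l2 : int) (p q : R * R) :
  0 < r -> 0 < d -> d * Num.sqrt 2 < r ->
  bounded2 X -> r_regular r X ->
  (forall v, lattice_pt d v -> ~ bdry X v) ->
  grey X d k l ->
  direct_neighbour k l k1 l1 -> direct_neighbour k l k2 l2 ->
  (k1, l1) <> (k2, l2) ->
  (exists v, is_vertex d k1 l1 v /\ is_vertex d k2 l2 v) ->
  ((black X d k1 l1 /\ black X d k2 l2) \/ (white X d k1 l1 /\ white X d k2 l2)) ->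
  is_vertex d k l p -> ~ pixel d k1 l1 p -> ~ pixel d k2 l2 p ->
  bdry X q -> pixel d k l q ->
  oball p d q.
Proof.
move=> r0 d0 dr _ hreg hlat _ hn1 hn2 hne _ hcol [i [j [hi [hj hp]]]] np1 np2 hq qC.
have [hc hr] := hreg.
have qX : X q.
  case: (pselect (X q)) => // nq; have [e [e0 he]] := hc q nq.
  have [[y [oy Xy]] _] := hq e e0; by have := he y oy.
have [c [Ec Hc]] : exists c, dist2 c q = r^+2 /\
    forall z, pixel d k1 l1 z \/ pixel d k2 l2 z -> r^+2 <= dist2 c z.
  have [xb [xw [hb [hw hi']]]] := hr q hq.
  have : (cball xb r `&` cball xw r) q by rewrite hi'.
  case=> qb qw.
  move: qb qw; rewrite /cball /= !(ed_le _ _ (ltW r0)) => qb qw.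
  case: hcol => [[b1 b2]|[w1 w2]].
  - exists xw; split.
    + apply/le_anti; rewrite qw /= leNgt; apply/negP => h.
      by apply: (hw q) => //; rewrite /oball /= ed_lt.
    + move=> z hz; rewrite leNgt; apply/negP => h.
      have Xz : X z.
        by case: hz => hz; [exact: (black_sub d0 b1 hc) | exact: (black_sub d0 b2 hc)].
      by apply: (hw z) => //; rewrite /oball /= ed_lt.
  - exists xb; split.
    + apply/le_anti; rewrite qb /= leNgt; apply/negP => h.
      have h' : Defs.edist xb q < r by rewrite ed_lt.
      have e0 : 0 < r - Defs.edist xb q by rewrite subr_gt0.
      have [_ [y [oy ny]]] := hq _ e0.
      apply: ny; apply: hb; move: oy; rewrite /oball /= => oy.
      apply: le_lt_trans (ed_tri xb q y) _; lra.
    + move=> z hz; rewrite leNgt; apply/negP => h.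
      have h' : Defs.edist xb z < r by rewrite ed_lt.
      have e0 : 0 < r - Defs.edist xb z by rewrite subr_gt0.
      have G : forall kk ll, white X d kk ll -> pixel d kk ll z -> False.
        move=> kk ll wh pz; rewrite pixE in pz.
        have [z' [oz dz]] := perturb (pix_lt kk d0) (pix_lt ll d0) e0 pz.
        apply: (white_open r0 d0 wh hreg oz); apply: hb; rewrite /oball /=.
        apply: le_lt_trans (ed_tri xb z z') _; lra.
      by case: hz; [exact: G _ _ w1 | exact: G _ _ w2].
have nl : forall a b : int, q <> (d * a%:~R, d * b%:~R).
  move=> a b E; apply: (hlat (d * a%:~R, d * b%:~R)); [by exists a, b | by rewrite -E].
have x1 := nl (k + 1 - i) (l + j).
have x2 := nl (k + i) (l + 1 - j).
have x3 := nl (k + 1 - i) (l + 1 - j).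
rewrite hp in np1 np2.
have N1 := nb d0 hn1 hi hj np1.
have N2 := nb d0 hn2 hi hj np2.
have P12 : forall z, pixel d (k + (1 - 2*i)) l z \/ pixel d k (l + (1 - 2*j)) z ->
    pixel d k1 l1 z \/ pixel d k2 l2 z.
  case: N1 => [[e1 f1]|[e1 f1]]; case: N2 => [[e2 f2]|[e2 f2]]; subst.
  - by exfalso; apply: hne.
  - by move=> z [h|h]; [left|right].
  - by move=> z [h|h]; [right|left].
  - by exfalso; apply: hne.
have rd : 2 * d^+2 < r^+2.
  have s2 : Num.sqrt 2 ^+ 2 = 2 :> R by rewrite sqr_sqrtr // ler0n.
  have h0 : 0 <= d * Num.sqrt 2 by rewrite mulr_ge0 ?sqrtr_ge0 // ltW.
  have : (d * Num.sqrt 2)^+2 < r^+2 by nra.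
  by rewrite exprMn s2 mulrC.
rewrite hp /oball /= ed_lt //.

have e0 : (1 - 2*0 : int) = 1 by [].
have e1 : (1 - 2*1 : int) = -1 by [].
move: P12 x1 x2 x3 qC.
have [->|->] : i = 0 \/ i = 1 by lia.
all: have [->|->] : j = 0 \/ j = 1 by lia.
all: move=> P12 x1 x2 x3 [/andP[qa qb] /andP[qc qd]].

4: (rewrite e1 in P12; apply: (@core1 R d r (-1) (-1) _ _ q c)).
3: (rewrite e1 e0 in P12; apply: (@core1 R d r (-1) 1 _ _ q c)).
2: (rewrite e0 e1 in P12; apply: (@core1 R d r 1 (-1) _ _ q c)).
1: (rewrite e0 in P12; apply: (@core1 R d r 1 1 _ _ q c)).
all: solve_ob Hc P12 x1 x2 x3.
Qed.
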